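(* Let $n\ge2$ and $T\subset\mathbb{N}$. If $\mathcal{P}_T$ is a PULB-space for dimension $n$, then the quadrature rule in condition (i) of the definition of PULB-space is unique; i.e., any two quadrature rules with nodes in $[-1,1]$ and positive weights that are exact on $\mathcal{P}_T$ and satisfy condition (ii) have the same nodes and the same weights.
   Context: $d\mu_n(t)=\gamma_n(1-t^2)^{(n-3)/2}dt$ is the probability measure on $[-1,1]$ with this density; $P_i^{(n)}$ is the Gegenbauer polynomial of degree $i$ (Jacobi with $\alpha=\beta=(n-3)/2$, normalized $P_i^{(n)}(1)=1$). $\mathcal{P}_T=\mathrm{span}\{P_i^{(n)}:i\in T\cup\{0\}\}$. A function $h:[-1,1]\to[0,+\infty]$, continuous on $[-1,1]$ and finite on $[-1,1)$, is absolutely monotone if $h^{(j)}(t)\ge0$ for all $j\ge0$, $t\in[-1,1)$. $\mathcal{L}(n,T,h)=\{f\in\mathcal{P}_T: f\le h\text{ on }[-1,1]\}$. A quadrature rule exact on $\mathcal{P}_T$ consists of nodes $\{\alpha_i\}\subset[-1,1]$ and weights $\{\rho_i\}\subset(0,1)$ with $\int_{-1}^1f\,d\mu_n=\sum_i\rho_if(\alpha_i)$ for all $f\in\mathcal{P}_T$. $\mathcal{P}_T$ is a PULB-space for dimension $n$ if (i) there is a quadrature rule with positive weights exact on $\mathcal{P}_T$ and (ii) for every absolutely monotone $h$ some $f\in\mathcal{L}(n,T,h)$ agrees with $h$ at the nodes of that rule. *)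

(* Defs.v *)
From Stdlib Require Import Reals List Permutation.
From Coquelicot Require Import Coquelicot.
Open Scope R_scope.

(** Gegenbauer polynomials P_i^{(n)}, normalized by P_i^{(n)}(1) = 1, given by
    the standard three-term recurrence
    P_0 = 1, P_1 = t,
    (i+n-2) P_{i+1}(t) = (2i+n-2) t P_i(t) - i P_{i-1}(t)   (i >= 1). *)
Fixpoint geg_pair (n : nat) (i : nat) (t : R) : R * R :=
  (* returns (P_i(t), P_{i+1}(t)) *)
  match i with
  | O => (1, t)
  | S k =>
      let (p, q) := geg_pair n k t in
      (q, ((2 * INR (S k) + INR n - 2) * t * q - INR (S k) * p)
            / (INR (S k) + INR n - 2))
  end.

Definition gegenbauer (n i : nat) (t : R) : R := fst (geg_pair n i t).

Definition weight (n : nat) (t : R) : R :=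
  Rpower (1 - t ^ 2) ((INR n - 3) / 2).

Definition gamma_n (n : nat) : R :=
  / RInt_gen (weight n) (at_right (-1)) (at_left 1).

Definition mu_integral (n : nat) (f : R -> R) : R :=
  gamma_n n * RInt_gen (fun t => f t * weight n t) (at_right (-1)) (at_left 1).

Definition in_PT (n : nat) (T : nat -> Prop) (f : R -> R) : Prop :=
  exists (N : nat) (c : nat -> R),
    (forall i, c i <> 0 -> i = 0%nat \/ T i) /\
    (forall t, f t = sum_f_R0 (fun i => c i * gegenbauer n i t) N).

Definition qsum (q : list (R * R)) (f : R -> R) : R :=
  fold_right (fun p acc => snd p * f (fst p) + acc) 0 q.

Definition quadrature_rule (n : nat) (T : nat -> Prop) (q : list (R * R)) : Prop :=
  NoDup (map fst q) /\
  (forall p, In p q -> -1 <= fst p <= 1 /\ 0 < snd p < 1) /\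
  (forall f, in_PT n T f -> mu_integral n f = qsum q f).

Definition deriv_on_I (f g : R -> R) : Prop :=
  forall t, -1 <= t < 1 ->
    filterlim (fun s => (f s - f t) / (s - t))
      (within (fun s => -1 <= s < 1 /\ s <> t) (locally t))
      (locally (g t)).

Definition abs_monotone (h : R -> Rbar) : Prop :=
  (forall t, -1 <= t <= 1 -> Rbar_le (Finite 0) (h t)) /\
  (forall t, -1 <= t < 1 -> is_finite (h t)) /\
  (forall t, -1 <= t < 1 ->
     filterlim (fun s => real (h s))
       (within (fun s => -1 <= s <= 1) (locally t)) (locally (real (h t)))) /\
  filterlim (fun s => real (h s)) (at_left 1) (Rbar_locally (h 1)) /\
  exists g : nat -> R -> R,
    (forall t, -1 <= t < 1 -> g 0%nat t = real (h t)) /\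
    (forall j, deriv_on_I (g j) (g (S j))) /\
    (forall j t, -1 <= t < 1 -> 0 <= g j t).

Definition in_L (n : nat) (T : nat -> Prop) (h : R -> Rbar) (f : R -> R) : Prop :=
  in_PT n T f /\ (forall t, -1 <= t <= 1 -> Rbar_le (Finite (f t)) (h t)).

Definition interpolation_cond (n : nat) (T : nat -> Prop) (q : list (R * R)) : Prop :=
  forall h, abs_monotone h ->
    exists f, in_L n T h f /\ (forall p, In p q -> Finite (f (fst p)) = h (fst p)).

Definition PULB_rule (n : nat) (T : nat -> Prop) (q : list (R * R)) : Prop :=
  quadrature_rule n T q /\ interpolation_cond n T q.

Definition PULB_space (n : nat) (T : nat -> Prop) : Prop :=
  exists q, PULB_rule n T q.

(* Main.v *)
Require Import Defs.
From Stdlib Require Import Reals List Permutation Lra Lia.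
From Coquelicot Require Import Coquelicot.
Open Scope R_scope.

Lemma qsum_ext q f g : (forall p, In p q -> f (fst p) = g (fst p)) -> qsum q f = qsum q g.
Proof.
  induction q as [|a q IH]; intros H; simpl; auto.
  rewrite (H a (or_introl eq_refl)), IH; auto. intros; apply H; simpl; auto.
Qed.

Lemma qsum_le q f g : (forall p, In p q -> 0 <= snd p /\ f (fst p) <= g (fst p)) ->
  qsum q f <= qsum q g.
Proof.
  induction q as [|a q IH]; intros H; simpl; [lra|].
  destruct (H a (or_introl eq_refl)).
  assert (qsum q f <= qsum q g) by (apply IH; intros; apply H; simpl; auto).
  apply Rplus_le_compat; auto. apply Rmult_le_compat_l; auto.
Qed.

Lemma qsum_lin q f g c : qsum q (fun t => f t - c * g t) = qsum q f - c * qsum q g.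
Proof. induction q as [|a q IH]; simpl; [ring|]. rewrite IH; ring. Qed.

Fixpoint fall (k j : nat) : nat :=
  match j with O => 1%nat | S j' => (fall k j' * (k - j'))%nat end.

Definition gder (k j : nat) (t : R) : R := INR (fall k j) * (1 + t) ^ (k - j).

Lemma dpl_filterlim f t l (D : R -> Prop) : derivable_pt_lim f t l ->
  filterlim (fun s => (f s - f t) / (s - t))
    (within (fun s => D s /\ s <> t) (locally t)) (locally l).
Proof.
  intros H. apply filterlim_locally. intros eps.
  destruct (H eps (cond_pos eps)) as [delta Hd].
  exists delta. intros y Hy [_ Hne]. change R in y.
  change (Rabs ((f y - f t) / (y - t) - l) < eps).
  change (Rabs (y - t) < delta) in Hy.
  assert (y - t <> 0) by lra.
  specialize (Hd (y - t) H0 Hy). replace (t + (y - t)) with y in Hd by ring. exact Hd.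
Qed.

Lemma poly_cont k (t : R) : filterlim (fun s : R => (1 + s) ^ k) (locally t) (locally ((1 + t) ^ k)).
Proof.
  apply (ex_derive_continuous (fun s => (1 + s) ^ k)). auto_derive. auto.
Qed.

Lemma absmon_pow k : abs_monotone (fun t => Finite ((1 + t) ^ k)).
Proof.
  split; [|split; [|split; [|split]]].
  - intros t Ht. simpl. apply pow_le. lra.
  - intros t _. reflexivity.
  - intros t _. simpl. eapply filterlim_filter_le_1; [apply filter_le_within|].
    apply poly_cont.
  - simpl. eapply filterlim_filter_le_1; [apply filter_le_within|].
    apply poly_cont.
  - exists (gder k). split; [|split].
    + intros t _. unfold gder. simpl. rewrite Nat.sub_0_r. ring.
    + intros j t Ht. apply dpl_filterlim. apply is_derive_Reals.
      unfold gder. auto_derive; auto. simpl fall. rewrite mult_INR.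
      destruct (k - j)%nat eqn:E.
      * simpl. ring.
      * replace (k - S j)%nat with n by lia. simpl pred. ring.
    + intros j t Ht. unfold gder. apply Rmult_le_pos. apply pos_INR. apply pow_le. lra.
Qed.

Lemma moments_eq n T q1 q2 : PULB_rule n T q1 -> PULB_rule n T q2 ->
  forall k, qsum q1 (fun t => (1 + t) ^ k) <= qsum q2 (fun t => (1 + t) ^ k).
Proof.
  intros [[_ [B1 E1]] I1] [[_ [B2 E2]] _] k.
  destruct (I1 _ (absmon_pow k)) as [f [[Pf Lf] Hf]].
  rewrite (qsum_ext q1 (fun t => (1 + t) ^ k) f).
  2: { intros p Hp. specialize (Hf p Hp). injection Hf. auto. }
  rewrite <- (E1 f Pf), (E2 f Pf). apply qsum_le.
  intros p Hp. destruct (B2 p Hp). split; [lra|]. specialize (Lf (fst p) H). exact Lf.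
Qed.

Definition W (q : list (R * R)) z := qsum q (fun t => if Req_EM_T t z then 1 else 0).

Lemma qsum_single q f z : (forall p, In p q -> fst p <> z -> f (fst p) = 0) ->
  qsum q f = W q z * f z.
Proof.
  unfold W. induction q as [|a q IH]; intros H; simpl; [ring|].
  rewrite IH by (intros; apply H; simpl; auto).
  destruct (Req_EM_T (fst a) z).
  - rewrite e. ring.
  - rewrite (H a (or_introl eq_refl) n). ring.
Qed.

Fixpoint prodp (l : list R) (t : R) : R :=
  match l with nil => 1 | z :: l' => (t - z) * prodp l' t end.

Lemma prodp_zero l t : In t l -> prodp l t = 0.
Proof. induction l; simpl; [tauto|intros [H|H]]. subst; ring. rewrite IHl; auto; ring. Qed.

Lemma prodp_nz l t : ~ In t l -> prodp l t <> 0.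
Proof.
  induction l; simpl; intros H. lra.
  apply Rmult_integral_contrapositive. split. intro. apply H; left; lra.
  apply IHl. auto.
Qed.

Lemma all_poly q1 q2 : (forall k, qsum q1 (fun t => (1 + t) ^ k) = qsum q2 (fun t => (1 + t) ^ k)) ->
  forall l k, qsum q1 (fun t => (1 + t) ^ k * prodp l t) = qsum q2 (fun t => (1 + t) ^ k * prodp l t).
Proof.
  intros H l. induction l as [|z l IH]; intros k; simpl.
  - rewrite (qsum_ext q1 _ (fun t => (1 + t) ^ k)) by (intros; ring).
    rewrite (qsum_ext q2 _ (fun t => (1 + t) ^ k)) by (intros; ring). auto.
  - assert (E : forall q, qsum q (fun t => (1 + t) ^ k * ((t - z) * prodp l t)) =
       qsum q (fun t => (1 + t) ^ (S k) * prodp l t) - (1 + z) * qsum q (fun t => (1 + t) ^ k * prodp l t)).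
    { intros q. rewrite <- qsum_lin. apply qsum_ext. intros; simpl; ring. }
    rewrite !E, !IH. auto.
Qed.

Lemma W_notin q z : ~ In z (map fst q) -> W q z = 0.
Proof.
  unfold W. induction q as [|a q IH]; simpl; intros H; auto.
  destruct (Req_EM_T (fst a) z). exfalso; auto. rewrite IH; auto. ring.
Qed.

Lemma W_in q z w : NoDup (map fst q) -> In (z, w) q -> W q z = w.
Proof.
  induction q as [|a q IH]; simpl; intros ND Hin; [contradiction|].
  inversion ND; subst. unfold W at 1; simpl; fold (W q z).
  destruct Hin as [Ha|Hin].
  - subst a. simpl. destruct (Req_EM_T z z); [|congruence].
    rewrite (W_notin q z H1). ring.
  - destruct (Req_EM_T (fst a) z).
    + exfalso. apply H1. rewrite e. apply (in_map fst _ _ Hin).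
    + rewrite IH; auto. ring.
Qed.

Lemma in_transfer q1 q2 : NoDup (map fst q1) -> NoDup (map fst q2) ->
  (forall p, In p q1 -> 0 < snd p) -> (forall p, In p q2 -> 0 < snd p) ->
  (forall z, W q1 z = W q2 z) -> forall p, In p q1 -> In p q2.
Proof.
  intros N1 N2 P1 P2 HW [z w] Hin.
  pose proof (W_in _ _ _ N1 Hin) as E1. rewrite HW in E1.
  destruct (in_dec Req_EM_T z (map fst q2)) as [Hz|Hz].
  - apply in_map_iff in Hz. destruct Hz as [[z' w'] [Ez Hin']]. simpl in Ez; subst z'.
    rewrite (W_in _ _ _ N2 Hin') in E1. subst. auto.
  - rewrite W_notin in E1 by auto. specialize (P1 _ Hin). simpl in P1. lra.
Qed.

Theorem corollary4p9 (n : nat) (T : nat -> Prop) :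
  (2 <= n)%nat ->
  PULB_space n T ->
  forall q1 q2 : list (R * R),
    PULB_rule n T q1 -> PULB_rule n T q2 ->
    Permutation q1 q2.
Proof.
  intros _ _ q1 q2 H1 H2.
  assert (M : forall k, qsum q1 (fun t => (1 + t) ^ k) = qsum q2 (fun t => (1 + t) ^ k)).
  { intros k. apply Rle_antisym; eapply moments_eq; eauto. }
  pose proof (all_poly _ _ M) as AP.
  assert (HW : forall z, W q1 z = W q2 z).
  { intros z. set (l := remove Req_EM_T z (map fst q1 ++ map fst q2)).
    specialize (AP l 0%nat).
    assert (Hz : prodp l z <> 0) by (apply prodp_nz; apply remove_In).
    assert (S : forall q, (forall p, In p q -> In (fst p) (map fst q1 ++ map fst q2)) ->
       qsum q (fun t => (1 + t) ^ 0 * prodp l t) = W q z * prodp l z).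
    { intros q Hq. rewrite (qsum_single q _ z).
      - simpl. ring.
      - intros p Hp Hne. rewrite prodp_zero. ring. apply in_in_remove; auto. }
    rewrite !S in AP.
    - apply Rmult_eq_reg_r in AP; auto.
    - intros p Hp. apply in_or_app; right. apply in_map; auto.
    - intros p Hp. apply in_or_app; left. apply in_map; auto. }
  destruct H1 as [[N1 [B1 _]] _]. destruct H2 as [[N2 [B2 _]] _].
  assert (P1 : forall p, In p q1 -> 0 < snd p) by (intros p Hp; apply (B1 p Hp)).
  assert (P2 : forall p, In p q2 -> 0 < snd p) by (intros p Hp; apply (B2 p Hp)).
  apply NoDup_Permutation; try (eapply NoDup_map_inv; eauto).
  intros p; split; apply in_transfer; auto.
Qed.
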